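(* Let $T$ be a triangle with no right angle. Then the complete 3-graph $K_4^3$ on four vertices (edges $123,124,134,234$) is forbidden for $T$.
   Context: A 3-graph is a 3-uniform hypergraph; $G$ is $F$-free if it has no (not necessarily induced) subhypergraph isomorphic to $F$. For a triangle $T$ with side lengths $a,b,c$ and $\varepsilon>0$, with $\varepsilon'=\varepsilon\min\{a,b,c\}$, a triangle $A'B'C'$ is $\varepsilon$-congruent to $T$ if there are $A,B,C\in\mathbb{R}^2$ with $ABC$ congruent to $T$ and $A',B',C'$ within distance $\varepsilon'$ of $A,B,C$ respectively. For finite $P\subseteq\mathbb{R}^2$, $\mathcal{H}(T,P,\varepsilon)$ is the 3-graph on $P$ whose edges are triples forming triangles $\varepsilon$-congruent to $T$. A 3-graph $H$ is forbidden for $T$ if there exists $\varepsilon>0$ such that for every $P\subseteq\mathbb{R}^2$ with $|P|=|V(H)|$, $\mathcal{H}(T,P,\varepsilon)$ is $H$-free. *)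

(* Defs.v *)
From Stdlib Require Import Reals List.
Import ListNotations.
Open Scope R_scope.

Definition point : Type := (R * R)%type.

Definition dist (p q : point) : R :=
  sqrt ((fst p - fst q)^2 + (snd p - snd q)^2).

Record tri3 : Type := Tri3 {
  side_a : R; side_b : R; side_c : R;
  side_a_pos : 0 < side_a; side_b_pos : 0 < side_b; side_c_pos : 0 < side_c;
  tri_ab : side_c < side_a + side_b;
  tri_bc : side_a < side_b + side_c;
  tri_ca : side_b < side_c + side_a }.

Definition right_angled (T : tri3) : Prop :=
  let a := side_a T in let b := side_b T in let c := side_c T in
  a^2 + b^2 = c^2 \/ b^2 + c^2 = a^2 \/ c^2 + a^2 = b^2.

Definition congruent (A B C : point) (T : tri3) : Prop :=
  let a := side_a T in let b := side_b T in let c := side_c T in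
  let x := dist B C in let y := dist C A in let z := dist A B in
  (x = a /\ y = b /\ z = c) \/ (x = a /\ y = c /\ z = b) \/
  (x = b /\ y = a /\ z = c) \/ (x = b /\ y = c /\ z = a) \/
  (x = c /\ y = a /\ z = b) \/ (x = c /\ y = b /\ z = a).

Definition eps_congruent (T : tri3) (eps : R) (A' B' C' : point) : Prop :=
  let eps' := eps * Rmin (side_a T) (Rmin (side_b T) (side_c T)) in
  exists A B C : point, congruent A B C T /\
    dist A' A <= eps' /\ dist B' B <= eps' /\ dist C' C <= eps'.

Definition HTPe_edge (T : tri3) (P : list point) (eps : R)
    (p q r : point) : Prop :=
  In p P /\ In q P /\ In r P /\ p <> q /\ q <> r /\ p <> r /\
  eps_congruent T eps p q r.

(* A 3-graph H on vertex set {0,...,nv-1} with edge list (triples) *)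
Record hgraph3 : Type := HGraph3 {
  hg_nv : nat;
  hg_edges : list (nat * nat * nat) }.

(* G (vertex list P, edge relation E) contains a (not necessarily induced)
   copy of H: an injective map of the vertices of H into P sending edges
   to edges. *)
Definition contains_copy (H : hgraph3) (P : list point)
    (E : point -> point -> point -> Prop) : Prop :=
  exists f : nat -> point,
    (forall i, (i < hg_nv H)%nat -> In (f i) P) /\
    (forall i j, (i < hg_nv H)%nat -> (j < hg_nv H)%nat -> f i = f j -> i = j) /\
    (forall i j k, In (i, j, k) (hg_edges H) -> E (f i) (f j) (f k)).

Definition forbidden (H : hgraph3) (T : tri3) : Prop :=
  exists eps : R, 0 < eps /\
    forall P : list point, NoDup P -> length P = hg_nv H ->
      ~ contains_copy H P (HTPe_edge T P eps).

(* complete 3-graph on 4 vertices: edges 123,124,134,234 (0-indexed) *)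
Definition K43 : hgraph3 :=
  HGraph3 4 [(0,1,2); (0,1,3); (0,2,3); (1,2,3)]%nat.

(* Main.v *)
Require Import Defs.
From Stdlib Require Import Reals List.
From Stdlib Require Import Lra Psatz.
From Stdlib Require Rgeom.
Require Import Defs.
Import ListNotations.
Open Scope R_scope.
Lemma abs_bounds x e : Rabs x <= e -> -e <= x <= e.
Proof. unfold Rabs; destruct Rcase_abs; lra. Qed.

Lemma dist_sym p q : dist p q = dist q p.
Proof. destruct p, q; unfold dist; simpl; f_equal; ring. Qed.

Lemma dist_pos p q : 0 <= dist p q.
Proof. apply sqrt_pos. Qed.

Lemma dist_sq p q : dist p q ^ 2 = (fst p - fst q)^2 + (snd p - snd q)^2.
Proof. unfold dist. apply pow2_sqrt. apply Rplus_le_le_0_compat; apply pow2_ge_0. Qed.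

Lemma dist_tri p q r : dist p r <= dist p q + dist q r.
Proof.
  destruct p as [x0 y0], q as [x2 y2], r as [x1 y1].
  pose proof (Rgeom.triangle x0 y0 x1 y1 x2 y2) as H.
  unfold Rgeom.dist_euc, Rsqr in H. unfold dist; cbn [fst snd].
  replace ((x0 - x1)^2 + (y0 - y1)^2) with ((x0 - x1) * (x0 - x1) + (y0 - y1) * (y0 - y1)) by ring.
  replace ((x0 - x2)^2 + (y0 - y2)^2) with ((x0 - x2) * (x0 - x2) + (y0 - y2) * (y0 - y2)) by ring.
  replace ((x2 - x1)^2 + (y2 - y1)^2) with ((x2 - x1) * (x2 - x1) + (y2 - y1) * (y2 - y1)) by ring.
  exact H.
Qed.

Lemma dist_close X Y A B e : dist X A <= e -> dist Y B <= e ->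
  Rabs (dist X Y - dist A B) <= 2*e.
Proof.
  intros HA HB. apply Rabs_le.
  pose proof (dist_tri X A Y). pose proof (dist_tri A B Y).
  pose proof (dist_tri A X B). pose proof (dist_tri X Y B).
  rewrite (dist_sym A X) in *. rewrite (dist_sym B Y) in *. lra.
Qed.

Definition perm3 (a b c u v w : R) : Prop :=
  (u = a /\ v = b /\ w = c) \/ (u = a /\ v = c /\ w = b) \/
  (u = b /\ v = a /\ w = c) \/ (u = b /\ v = c /\ w = a) \/
  (u = c /\ v = a /\ w = b) \/ (u = c /\ v = b /\ w = a).

Definition in3 (a b c x : R) : Prop := x = a \/ x = b \/ x = c.

Lemma perm3_in a b c u v w : perm3 a b c u v w -> in3 a b c u /\ in3 a b c v /\ in3 a b c w.
Proof. unfold perm3, in3; intuition. Qed.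

Lemma face_approx T eps X Y Z : eps_congruent T eps X Y Z ->
  exists u v w, perm3 (side_a T) (side_b T) (side_c T) u v w /\
   Rabs (dist Y Z - u) <= 2*(eps * Rmin (side_a T) (Rmin (side_b T) (side_c T))) /\
   Rabs (dist Z X - v) <= 2*(eps * Rmin (side_a T) (Rmin (side_b T) (side_c T))) /\
   Rabs (dist X Y - w) <= 2*(eps * Rmin (side_a T) (Rmin (side_b T) (side_c T))).
Proof.
  intros [A [B [C [Hc [HA [HB HC]]]]]].
  exists (dist B C), (dist C A), (dist A B). split.
  - exact Hc.
  - repeat split; apply dist_close; assumption.
Qed.

Definition vv (a b c e d : R) : R :=
  if Rle_dec (Rabs (d - a)) e then a else if Rle_dec (Rabs (d - b)) e then b else c.

Lemma vv_spec a b c e d u :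
  (forall x y, in3 a b c x -> in3 a b c y -> Rabs (x - y) <= 2*e -> x = y) ->
  in3 a b c u -> Rabs (d - u) <= e -> vv a b c e d = u.
Proof.
  intros Hs Hu Hd. pose proof (abs_bounds _ _ Hd).
  unfold vv. destruct (Rle_dec (Rabs (d - a)) e) as [H1|H1].
  - apply Hs; [left; reflexivity| exact Hu|].
    pose proof (abs_bounds _ _ H1). apply Rabs_le; lra.
  - destruct (Rle_dec (Rabs (d - b)) e) as [H2|H2].
    + apply Hs; [right; left; reflexivity| exact Hu|].
      pose proof (abs_bounds _ _ H2). apply Rabs_le; lra.
    + destruct Hu as [Hu|[Hu|Hu]]; subst u; [contradiction|contradiction|reflexivity].
Qed.

Lemma face_vv a b c e u v w d1 d2 d3 :
  (forall x y, in3 a b c x -> in3 a b c y -> Rabs (x - y) <= 2*e -> x = y) ->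
  perm3 a b c u v w -> Rabs (d1 - u) <= e -> Rabs (d2 - v) <= e -> Rabs (d3 - w) <= e ->
  perm3 a b c (vv a b c e d1) (vv a b c e d2) (vv a b c e d3).
Proof.
  intros Hs Hp H1 H2 H3. destruct (perm3_in _ _ _ _ _ _ Hp) as [I1 [I2 I3]].
  rewrite (vv_spec _ _ _ _ _ _ Hs I1 H1), (vv_spec _ _ _ _ _ _ Hs I2 H2),
          (vv_spec _ _ _ _ _ _ Hs I3 H3). exact Hp.
Qed.

Lemma vv_close a b c e d u :
  (forall x y, in3 a b c x -> in3 a b c y -> Rabs (x - y) <= 2*e -> x = y) ->
  in3 a b c u -> Rabs (d - u) <= e -> Rabs (d - vv a b c e d) <= e.
Proof. intros Hs Hu Hd. rewrite (vv_spec _ _ _ _ _ _ Hs Hu Hd). exact Hd. Qed.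

Lemma vv_in a b c e d : in3 a b c (vv a b c e d).
Proof. unfold vv, in3. destruct Rle_dec; auto. destruct Rle_dec; auto. Qed.

Lemma perm3_sym a b c u v w : perm3 a b c u v w ->
  u+v+w = a+b+c /\ u*v+v*w+w*u = a*b+b*c+c*a.
Proof.
  unfold perm3; intros H.
  destruct H as [[-> [-> ->]]|[[-> [-> ->]]|[[-> [-> ->]]|[[-> [-> ->]]|[[-> [-> ->]]|[-> [-> ->]]]]]]];
  split; ring.
Qed.

Lemma pair_cancel y z y' z' : y+z = y'+z' -> y*z = y'*z' ->
  (y = y' /\ z = z') \/ (y = z' /\ z = y').
Proof.
  intros Hs Hp.
  assert (E : (y-y')*(y-z') = y*y - y*(y'+z') + y'*z') by ring.
  rewrite <- Hs, <- Hp in E.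
  assert (E2 : (y-y')*(y-z') = 0) by (rewrite E; ring).
  destruct (Rmult_integral _ _ E2); [left|right]; split; lra.
Qed.

Lemma share_cancel x y z y' z' s p :
  x+y+z = s -> x*y+y*z+z*x = p -> x+y'+z' = s -> x*y'+y'*z'+z'*x = p ->
  (y = y' /\ z = z') \/ (y = z' /\ z = y').
Proof.
  intros H1 H2 H3 H4. apply pair_cancel; [lra|].
  assert (Hs : y + z = y' + z') by lra.
  replace (y*z) with ((x*y+y*z+z*x) - x*(y+z)) by ring.
  replace (y'*z') with ((x*y'+y'*z'+z'*x) - x*(y'+z')) by ring.
  rewrite Hs, H2, H4. ring.
Qed.

Lemma opp_equal a b c x01 x02 x03 x12 x13 x23 :
  perm3 a b c x12 x02 x01 -> perm3 a b c x13 x03 x01 ->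
  perm3 a b c x23 x03 x02 -> perm3 a b c x23 x13 x12 ->
  x01 = x23 /\ x02 = x13 /\ x03 = x12.
Proof.
  intros P1 P2 P3 P4.
  destruct (perm3_sym _ _ _ _ _ _ P1) as [S1 T1].
  destruct (perm3_sym _ _ _ _ _ _ P2) as [S2 T2].
  destruct (perm3_sym _ _ _ _ _ _ P3) as [S3 T3].
  destruct (perm3_sym _ _ _ _ _ _ P4) as [S4 T4].
  assert (C1 : (x02 = x03 /\ x12 = x13) \/ (x02 = x13 /\ x12 = x03)).
  { apply (share_cancel x01 x02 x12 x03 x13 (a+b+c) (a*b+b*c+c*a)).
    - lra.
    - rewrite <- T1; ring.
    - lra.
    - rewrite <- T2; ring. }
  assert (C2 : (x02 = x12 /\ x03 = x13) \/ (x02 = x13 /\ x03 = x12)).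
  { apply (share_cancel x23 x02 x03 x12 x13 (a+b+c) (a*b+b*c+c*a)).
    - lra.
    - rewrite <- T3; ring.
    - lra.
    - rewrite <- T4; ring. }
  destruct C1 as [[E1 E2]|[E1 E2]].
  - destruct C2 as [[E3 E4]|[E3 E4]]; repeat split; lra.
  - repeat split; lra.
Qed.
Definition det3 m11 m12 m13 m22 m23 m33 : R :=
  m11*m22*m33 + m12*m23*m13 + m13*m12*m23 - m11*m23*m23 - m22*m13*m13 - m33*m12*m12.

Lemma det_exact V1 V2 V3 :
  det3 V1 ((V1+V2-V3)/2) ((V1+V3-V2)/2) V2 ((V2+V3-V1)/2) V3 =
  (V2+V3-V1)*(V1+V3-V2)*(V1+V2-V3)/2.
Proof. unfold det3. field. Qed.

Lemma planar (p0 p1 p2 p3 : point) :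
  let D01 := dist p0 p1 ^ 2 in let D02 := dist p0 p2 ^ 2 in let D03 := dist p0 p3 ^ 2 in
  let D12 := dist p1 p2 ^ 2 in let D13 := dist p1 p3 ^ 2 in let D23 := dist p2 p3 ^ 2 in
  det3 D01 ((D01+D02-D12)/2) ((D01+D03-D13)/2) D02 ((D02+D03-D23)/2) D03 = 0.
Proof.
  intros. subst D01 D02 D03 D12 D13 D23. rewrite !dist_sq.
  destruct p0, p1, p2, p3; cbn [fst snd]. unfold det3. field.
Qed.

Lemma prod3_pert K eta u v w u' v' w' : 0 <= K -> 0 <= eta <= 1 ->
  Rabs u <= K -> Rabs v <= K -> Rabs w <= K ->
  Rabs (u'-u) <= eta -> Rabs (v'-v) <= eta -> Rabs (w'-w) <= eta ->
  Rabs (u'*v'*w' - u*v*w) <= 3*((K+1)*(K+1))*eta.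
Proof.
  intros HK He Hu Hv Hw Hu' Hv' Hw'.
  assert (Bv : Rabs v' <= K+1).
  { replace v' with (v + (v'-v)) by ring. eapply Rle_trans; [apply Rabs_triang|lra]. }
  assert (Bw : Rabs w' <= K+1).
  { replace w' with (w + (w'-w)) by ring. eapply Rle_trans; [apply Rabs_triang|lra]. }
  replace (u'*v'*w' - u*v*w) with ((u'-u)*v'*w' + (u*(v'-v)*w' + u*v*(w'-w))) by ring.
  pose proof (Rabs_pos u). pose proof (Rabs_pos v). pose proof (Rabs_pos (u'-u)).
  pose proof (Rabs_pos (v'-v)). pose proof (Rabs_pos (w'-w)). pose proof (Rabs_pos v').
  pose proof (Rabs_pos w').
  assert (T1 : Rabs ((u'-u)*v'*w') <= eta*(K+1)*(K+1)).
  { rewrite !Rabs_mult. apply Rmult_le_compat; try apply Rmult_le_pos; try lra.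
    apply Rmult_le_compat; lra. }
  assert (T2 : Rabs (u*(v'-v)*w') <= (K+1)*eta*(K+1)).
  { rewrite !Rabs_mult. apply Rmult_le_compat; try apply Rmult_le_pos; try lra.
    apply Rmult_le_compat; lra. }
  assert (T3 : Rabs (u*v*(w'-w)) <= (K+1)*(K+1)*eta).
  { rewrite !Rabs_mult. apply Rmult_le_compat; try apply Rmult_le_pos; try lra.
    apply Rmult_le_compat; lra. }
  eapply Rle_trans; [apply Rabs_triang|].
  eapply Rle_trans; [apply Rplus_le_compat; [apply T1|apply Rabs_triang]|].
  nra.
Qed.

Lemma det_pert K eta m11 m12 m13 m22 m23 m33 n11 n12 n13 n22 n23 n33 :
  0 <= K -> 0 <= eta <= 1 ->
  Rabs m11 <= K -> Rabs m12 <= K -> Rabs m13 <= K -> Rabs m22 <= K -> Rabs m23 <= K -> Rabs m33 <= K ->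
  Rabs (n11-m11) <= eta -> Rabs (n12-m12) <= eta -> Rabs (n13-m13) <= eta ->
  Rabs (n22-m22) <= eta -> Rabs (n23-m23) <= eta -> Rabs (n33-m33) <= eta ->
  Rabs (det3 n11 n12 n13 n22 n23 n33 - det3 m11 m12 m13 m22 m23 m33) <= 18*((K+1)*(K+1))*eta.
Proof.
  intros. unfold det3.
  pose proof (abs_bounds _ _ (prod3_pert K eta m11 m22 m33 n11 n22 n33 ltac:(assumption) ltac:(assumption) ltac:(assumption) ltac:(assumption) ltac:(assumption) ltac:(assumption) ltac:(assumption) ltac:(assumption))).
  pose proof (abs_bounds _ _ (prod3_pert K eta m12 m23 m13 n12 n23 n13 ltac:(assumption) ltac:(assumption) ltac:(assumption) ltac:(assumption) ltac:(assumption) ltac:(assumption) ltac:(assumption) ltac:(assumption))).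
  pose proof (abs_bounds _ _ (prod3_pert K eta m13 m12 m23 n13 n12 n23 ltac:(assumption) ltac:(assumption) ltac:(assumption) ltac:(assumption) ltac:(assumption) ltac:(assumption) ltac:(assumption) ltac:(assumption))).
  pose proof (abs_bounds _ _ (prod3_pert K eta m11 m23 m23 n11 n23 n23 ltac:(assumption) ltac:(assumption) ltac:(assumption) ltac:(assumption) ltac:(assumption) ltac:(assumption) ltac:(assumption) ltac:(assumption))).
  pose proof (abs_bounds _ _ (prod3_pert K eta m22 m13 m13 n22 n13 n13 ltac:(assumption) ltac:(assumption) ltac:(assumption) ltac:(assumption) ltac:(assumption) ltac:(assumption) ltac:(assumption) ltac:(assumption))).
  pose proof (abs_bounds _ _ (prod3_pert K eta m33 m12 m12 n33 n12 n12 ltac:(assumption) ltac:(assumption) ltac:(assumption) ltac:(assumption) ltac:(assumption) ltac:(assumption) ltac:(assumption) ltac:(assumption))).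
  apply Rabs_le. lra.
Qed.

Lemma sq_close d x M del : 0 <= d -> 0 <= x <= M -> 0 <= del <= 1 -> Rabs (d - x) <= del ->
  Rabs (d^2 - x^2) <= del*(2*M+1).
Proof.
  intros Hd Hx Hdel H. pose proof (abs_bounds _ _ H).
  replace (d^2 - x^2) with ((d-x)*(d+x)) by ring. rewrite Rabs_mult.
  rewrite (Rabs_pos_eq (d+x)) by lra.
  apply Rmult_le_compat; try lra. apply Rabs_pos.
Qed.
Lemma prodQ a b c u v w : perm3 a b c u v w ->
  (v^2+u^2-w^2)*(w^2+u^2-v^2)*(w^2+v^2-u^2) =
  (b^2+c^2-a^2)*(a^2+c^2-b^2)*(a^2+b^2-c^2).
Proof.
  unfold perm3; intros H.
  destruct H as [[-> [-> ->]]|[[-> [-> ->]]|[[-> [-> ->]]|[[-> [-> ->]]|[[-> [-> ->]]|[-> [-> ->]]]]]]];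
  ring.
Qed.

Definition Face a b c del (X Y Z : point) : Prop :=
  exists u v w, perm3 a b c u v w /\ Rabs (dist Y Z - u) <= del /\
    Rabs (dist Z X - v) <= del /\ Rabs (dist X Y - w) <= del.

Lemma in3_bound a b c x : 0 < a -> 0 < b -> 0 < c -> in3 a b c x -> 0 <= x <= a+b+c.
Proof. unfold in3; intros; lra. Qed.

Lemma core a b c del (p0 p1 p2 p3 : point) :
  0 < a -> 0 < b -> 0 < c -> 0 < del ->
  (forall x y, in3 a b c x -> in3 a b c y -> Rabs (x - y) <= 2*del -> x = y) ->
  del * (2*(2*(a+b+c)+1)) <= 1 ->
  del * (144*(((a+b+c)^2+1)*((a+b+c)^2+1))*(2*(a+b+c)+1)) <=
     Rabs ((b^2+c^2-a^2)*(a^2+c^2-b^2)*(a^2+b^2-c^2)) ->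
  (b^2+c^2-a^2)*(a^2+c^2-b^2)*(a^2+b^2-c^2) <> 0 ->
  Face a b c del p0 p1 p2 -> Face a b c del p0 p1 p3 ->
  Face a b c del p0 p2 p3 -> Face a b c del p1 p2 p3 -> False.
Proof.
  intros ha hb hc hdel Hs Hd1 HdQ HQ F1 F2 F3 F4.
  set (M := a+b+c) in *.
  set (Q := (b^2+c^2-a^2)*(a^2+c^2-b^2)*(a^2+b^2-c^2)) in *.
  set (x01 := vv a b c del (dist p0 p1)).
  set (x02 := vv a b c del (dist p0 p2)).
  set (x03 := vv a b c del (dist p0 p3)).
  set (x12 := vv a b c del (dist p1 p2)).
  set (x13 := vv a b c del (dist p1 p3)).
  set (x23 := vv a b c del (dist p2 p3)).
  destruct F1 as [u1 [v1 [w1 [P1 [A1 [B1 C1]]]]]].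
  destruct F2 as [u2 [v2 [w2 [P2 [A2 [B2 C2]]]]]].
  destruct F3 as [u3 [v3 [w3 [P3 [A3 [B3 C3]]]]]].
  destruct F4 as [u4 [v4 [w4 [P4 [A4 [B4 C4]]]]]].
  rewrite (dist_sym p2 p0) in B1. rewrite (dist_sym p3 p0) in B2.
  rewrite (dist_sym p3 p0) in B3. rewrite (dist_sym p3 p1) in B4.
  pose proof (face_vv _ _ _ _ _ _ _ _ _ _ Hs P1 A1 B1 C1) as Q1.
  pose proof (face_vv _ _ _ _ _ _ _ _ _ _ Hs P2 A2 B2 C2) as Q2.
  pose proof (face_vv _ _ _ _ _ _ _ _ _ _ Hs P3 A3 B3 C3) as Q3.
  pose proof (face_vv _ _ _ _ _ _ _ _ _ _ Hs P4 A4 B4 C4) as Q4.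
  fold x01 x02 x03 x12 x13 x23 in Q1, Q2, Q3, Q4.
  destruct (opp_equal _ _ _ _ _ _ _ _ _ Q1 Q2 Q3 Q4) as [E1 [E2 E3]].
  destruct (perm3_in _ _ _ _ _ _ P1) as [I1 [I2 I3]].
  destruct (perm3_in _ _ _ _ _ _ P2) as [I4 [I5 I6]].
  destruct (perm3_in _ _ _ _ _ _ P3) as [I7 [I8 I9]].
  pose proof (vv_close _ _ _ _ _ _ Hs I1 A1) as K12. fold x12 in K12.
  pose proof (vv_close _ _ _ _ _ _ Hs I2 B1) as K02. fold x02 in K02.
  pose proof (vv_close _ _ _ _ _ _ Hs I3 C1) as K01. fold x01 in K01.
  pose proof (vv_close _ _ _ _ _ _ Hs I4 A2) as K13. fold x13 in K13.
  pose proof (vv_close _ _ _ _ _ _ Hs I5 B2) as K03. fold x03 in K03.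
  pose proof (vv_close _ _ _ _ _ _ Hs I7 A3) as K23. fold x23 in K23.
  assert (hM : 0 < M) by (unfold M; lra).
  assert (hdel1 : 0 <= del <= 1).
  { assert (0 <= del * M) by (apply Rmult_le_pos; lra). lra. }
  assert (B01 := in3_bound _ _ _ _ ha hb hc (vv_in a b c del (dist p0 p1))). fold x01 M in B01.
  assert (B02 := in3_bound _ _ _ _ ha hb hc (vv_in a b c del (dist p0 p2))). fold x02 M in B02.
  assert (B03 := in3_bound _ _ _ _ ha hb hc (vv_in a b c del (dist p0 p3))). fold x03 M in B03.
  rewrite <- E1 in K23. rewrite <- E2 in K13. rewrite <- E3 in K12. rewrite <- E3 in Q1.
  pose proof (abs_bounds _ _ (sq_close _ _ _ _ (dist_pos p0 p1) B01 hdel1 K01)) as S01.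
  pose proof (abs_bounds _ _ (sq_close _ _ _ _ (dist_pos p0 p2) B02 hdel1 K02)) as S02.
  pose proof (abs_bounds _ _ (sq_close _ _ _ _ (dist_pos p0 p3) B03 hdel1 K03)) as S03.
  pose proof (abs_bounds _ _ (sq_close _ _ _ _ (dist_pos p2 p3) B01 hdel1 K23)) as S23.
  pose proof (abs_bounds _ _ (sq_close _ _ _ _ (dist_pos p1 p3) B02 hdel1 K13)) as S13.
  pose proof (abs_bounds _ _ (sq_close _ _ _ _ (dist_pos p1 p2) B03 hdel1 K12)) as S12.
  set (z := del*(2*M+1)) in *.
  assert (hz : 0 <= z) by (unfold z; apply Rmult_le_pos; lra).
  assert (hz1 : 2*z <= 1) by (unfold z; lra).
  assert (V1b : 0 <= x01^2 <= M^2) by (split; [apply pow2_ge_0| apply pow_incr; lra]).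
  assert (V2b : 0 <= x02^2 <= M^2) by (split; [apply pow2_ge_0| apply pow_incr; lra]).
  assert (V3b : 0 <= x03^2 <= M^2) by (split; [apply pow2_ge_0| apply pow_incr; lra]).
  assert (hK : 0 <= M^2) by apply pow2_ge_0.
  pose proof (det_pert (M^2) (2*z)
    (x01^2) ((x01^2+x02^2-x03^2)/2) ((x01^2+x03^2-x02^2)/2) (x02^2) ((x02^2+x03^2-x01^2)/2) (x03^2)
    (dist p0 p1 ^2) ((dist p0 p1 ^2 + dist p0 p2 ^2 - dist p1 p2 ^2)/2)
    ((dist p0 p1 ^2 + dist p0 p3 ^2 - dist p1 p3 ^2)/2) (dist p0 p2 ^2)
    ((dist p0 p2 ^2 + dist p0 p3 ^2 - dist p2 p3 ^2)/2) (dist p0 p3 ^2)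
    hK ltac:(lra)) as D.
  rewrite (planar p0 p1 p2 p3) in D.
  rewrite det_exact in D.
  rewrite (prodQ _ _ _ _ _ _ Q1) in D. fold Q in D.
  assert (Dv : Rabs (0 - Q/2) <= 18*((M^2+1)*(M^2+1))*(2*z)).
  { apply D; apply Rabs_le; lra. }
  replace (0 - Q/2) with (-(Q/2)) in Dv by ring. rewrite Rabs_Ropp in Dv.
  unfold Rdiv in Dv. rewrite Rabs_mult in Dv. rewrite (Rabs_pos_eq (/2)) in Dv by lra.
  assert (hQ : 0 < Rabs Q) by (apply Rabs_pos_lt; exact HQ).
  unfold z in Dv. lra.
Qed.
Definition gp (x y : R) : R := if Req_EM_T x y then 1 else Rabs (x - y).

Lemma gp_pos x y : 0 < gp x y.
Proof. unfold gp; destruct Req_EM_T; [lra|]. apply Rabs_pos_lt. intro; apply n; lra. Qed.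

Lemma gp_spec x y g : g <= gp x y -> x = y \/ g <= Rabs (x - y).
Proof. unfold gp; destruct Req_EM_T; auto. Qed.

Lemma sep_exists a b c : exists g, 0 < g /\
  forall x y, in3 a b c x -> in3 a b c y -> x = y \/ g <= Rabs (x - y).
Proof.
  exists (Rmin (gp a b) (Rmin (gp b c) (gp c a))). split.
  { repeat apply Rmin_pos; apply gp_pos. }
  pose proof (Rmin_l (gp a b) (Rmin (gp b c) (gp c a))).
  pose proof (Rmin_r (gp a b) (Rmin (gp b c) (gp c a))).
  pose proof (Rmin_l (gp b c) (gp c a)). pose proof (Rmin_r (gp b c) (gp c a)).
  set (g := Rmin (gp a b) (Rmin (gp b c) (gp c a))) in *.
  assert (Hab : a = b \/ g <= Rabs (a - b)) by (apply gp_spec; lra).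
  assert (Hbc : b = c \/ g <= Rabs (b - c)) by (apply gp_spec; lra).
  assert (Hca : c = a \/ g <= Rabs (c - a)) by (apply gp_spec; lra).
  intros x y [Hx|[Hx|Hx]] [Hy|[Hy|Hy]]; subst x y; auto;
  rewrite ?(Rabs_minus_sym b a), ?(Rabs_minus_sym c b), ?(Rabs_minus_sym a c);
  intuition.
Qed.

Theorem lemma2p8 (T : tri3) : ~ right_angled T -> forbidden K43 T.
Proof.
  intros HR. unfold right_angled in HR; cbv zeta in HR.
  pose proof (side_a_pos T) as ha. pose proof (side_b_pos T) as hb. pose proof (side_c_pos T) as hc.
  revert HR ha hb hc.
  unfold forbidden, HTPe_edge.
  generalize (face_approx T).
  generalize (side_a T) (side_b T) (side_c T). intros a b c Hface HR ha hb hc.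
  set (Q := (b^2+c^2-a^2)*(a^2+c^2-b^2)*(a^2+b^2-c^2)).
  assert (HQ : Q <> 0).
  { unfold Q; intro H. apply Rmult_integral in H as [H|H]; [apply Rmult_integral in H as [H|H]|];
    apply HR; lra. }
  destruct (sep_exists a b c) as [g [hg Hg]].
  set (M := a+b+c).
  assert (hM : 0 < M) by (unfold M; lra).
  set (L := 144*((M^2+1)*(M^2+1))*(2*M+1)).
  assert (hL : 0 < L).
  { unfold L. assert (0 <= M^2) by apply pow2_ge_0.
    apply Rmult_lt_0_compat; [|lra]. apply Rmult_lt_0_compat; [lra|]. nra. }
  assert (hQ : 0 < Rabs Q) by (apply Rabs_pos_lt; exact HQ).
  set (del := Rmin (/(2*(2*M+1))) (Rmin (g/4) (Rabs Q / L))).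
  assert (hdel : 0 < del).
  { unfold del. apply Rmin_pos; [apply Rinv_0_lt_compat; lra|].
    apply Rmin_pos; [lra|]. apply Rdiv_lt_0_compat; lra. }
  pose proof (Rmin_l (/(2*(2*M+1))) (Rmin (g/4) (Rabs Q / L))) as D1.
  pose proof (Rmin_r (/(2*(2*M+1))) (Rmin (g/4) (Rabs Q / L))) as D2.
  pose proof (Rmin_l (g/4) (Rabs Q / L)) as D3. pose proof (Rmin_r (g/4) (Rabs Q / L)) as D4.
  fold del in D1, D2.
  set (m := Rmin a (Rmin b c)).
  assert (hm : 0 < m) by (unfold m; repeat apply Rmin_pos; lra).
  exists (del / (2*m)). split; [apply Rdiv_lt_0_compat; lra|].
  intros P HP Hlen [f [Hin [Hinj Hed]]].
  assert (He : 2 * (del / (2*m) * m) = del) by (field; lra).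
  assert (Hs : forall x y, in3 a b c x -> in3 a b c y -> Rabs (x - y) <= 2*del -> x = y).
  { intros x y Hx Hy Hxy. destruct (Hg x y Hx Hy); [assumption|lra]. }
  assert (Hd1 : del * (2*(2*M+1)) <= 1).
  { pose proof (Rmult_le_compat_r (2*(2*M+1)) _ _ ltac:(lra) D1) as X.
    rewrite Rinv_l in X by lra. exact X. }
  assert (HdQ : del * L <= Rabs Q).
  { replace (Rabs Q) with (Rabs Q / L * L) by (field; lra).
    apply Rmult_le_compat_r; lra. }
  assert (FF : forall i j k, In (i,j,k) (hg_edges K43) -> Face a b c del (f i) (f j) (f k)).
  { intros i j k Hijk. destruct (Hed i j k Hijk) as [_ [_ [_ [_ [_ [_ C]]]]]].
    destruct (Hface _ _ _ _ C) as [u [v [w [Hp [H1 [H2 H3]]]]]].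
    fold m in H1, H2, H3. rewrite He in H1, H2, H3.
    exists u, v, w. auto. }
  apply (core a b c del (f 0%nat) (f 1%nat) (f 2%nat) (f 3%nat) ha hb hc hdel Hs Hd1 HdQ HQ);
    apply FF; simpl; auto.
Qed.
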